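(* Suppose each $f_v$ is $K_v$-Lipschitz and let $\bar K=\frac1{rn}\sum_vK_v$. If $T$ is sampled uniformly from all subsets of $V(G)$ of size $pn$, then $|\mathbb E_T(\xi)|\le\frac{\bar K}{rn-1}$.
   Context: Let $n,p,q$ be positive integers, $r=p+q$, $G$ a finite simple graph with $|V(G)|=rn$ and no isolated vertices; $\mathcal N(v)$, $d(v)$ neighbor set and degree. For each $v$, $f_v:2^{\mathcal N(v)}\to\mathbb R$ with $f_v(\emptyset)=0$. $\sigma_T(v)=q$ if $v\in T$, $-p$ otherwise; for $|T|=pn$, $\xi=\frac1{pqn}\sum_v\sigma_T(v)f_v(T\cap\mathcal N(v))$. $f_v$ is $K_v$-Lipschitz ($K_v>0$) if $|f_v(A)-f_v(A')|\le K_v|A\triangle A'|/d(v)$ for all $A,A'\subseteq\mathcal N(v)$. *)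

(* Defs.v *)
From HB Require Import structures.
From mathcomp Require Import all_boot all_order all_algebra.
Unset Printing Implicit Defensive.
Import Order.TTheory GRing.Theory Num.Theory.
Local Open Scope ring_scope.

Definition simple_graph (V : finType) (e : rel V) : Prop :=
  symmetric e /\ irreflexive e.

Definition nbhd (V : finType) (e : rel V) (v : V) : {set V} := [set u | e v u].
Definition deg (V : finType) (e : rel V) (v : V) : nat := #|nbhd V e v|.

Definition sigma (R : numDomainType) (V : finType) (p q : nat) (T : {set V}) (v : V) : R :=
  if v \in T then q%:R else - (p%:R).

Definition xi (R : numFieldType) (V : finType) (e : rel V) (n p q : nat)
  (f : V -> {set V} -> R) (T : {set V}) : R :=
  ((p * q * n)%:R)^-1 * \sum_(v : V) sigma R V p q T v * f v (T :&: nbhd V e v).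

Definition lipschitz_at (R : numFieldType) (V : finType) (e : rel V)
  (f : V -> {set V} -> R) (K : V -> R) (v : V) : Prop :=
  0 < K v /\
  forall A A' : {set V}, A \subset nbhd V e v -> A' \subset nbhd V e v ->
    `|f v A - f v A'| <= K v * #|(A :\: A') :|: (A' :\: A)|%:R / (deg V e v)%:R.

Definition expect_size (R : numFieldType) (V : finType) (k : nat)
  (X : {set V} -> R) : R :=
  (\sum_(T : {set V} | #|T| == k) X T) / #|[set T : {set V} | #|T| == k]|%:R.

(* Main.v *)
Require Import Defs.
From HB Require Import structures.
From mathcomp Require Import all_boot all_order all_algebra.
From mathcomp Require Import zify ring.
Import Order.TTheory GRing.Theory Num.Theory.
Local Open Scope ring_scope.

Lemma sum_bij (R : nmodType) (I : finType) (P Q : pred I) (h hh : I -> I)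
  (F G : I -> R) :
  (forall i, P i -> Q (h i)) -> (forall j, Q j -> P (hh j)) ->
  (forall i, P i -> hh (h i) = i) -> (forall j, Q j -> h (hh j) = j) ->
  (forall i, P i -> F i = G (h i)) ->
  \sum_(i | P i) F i = \sum_(j | Q j) G j.
Proof.
move=> PQ QP hK hhK FG.
rewrite (reindex_onto h hh hhK); apply: eq_big => [i|i Pi]; last exact: FG.
apply/idP/idP => [Pi|/andP[Qhi /eqP <-]]; last exact: QP.
by rewrite PQ //= hK.
Qed.

Lemma count_c (V : finType) (v w : V) (k : nat) : v != w ->
  #|[set T : {set V} | (#|T| == k.+1) && (v \in T) && (w \notin T)]| =
  'C(#|V| - 2, k).
Proof.
move=> nvw.
have -> : [set T : {set V} | (#|T| == k.+1) && (v \in T) && (w \notin T)] =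
  (fun A : {set V} => v |: A) @: [set A : {set V} | A \subset ~: [set v; w] & #|A| == k].
  apply/setP => T; rewrite !inE; apply/idP/idP.
    case/andP => /andP[/eqP cT vT] wT.
    apply/imsetP; exists (T :\ v); last by rewrite setD1K.
    rewrite inE; apply/andP; split.
      apply/subsetP => x; rewrite !inE => /andP[xv xT].
      by rewrite negb_or xv; apply/eqP => xw; rewrite -xw xT in wT.
    by move: (cardsD1 v T); rewrite vT cT add1n => -[<-].
  case/imsetP => A; rewrite inE => /andP[sA /eqP cA] ->.
  have vA : v \notin A by apply/negP => /(subsetP sA); rewrite !inE eqxx.
  have wA : w \notin A by apply/negP => /(subsetP sA); rewrite !inE eqxx orbT.
  rewrite cardsU1 vA cA add1n eqxx setU11 /= !inE negb_or wA andbT.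
  by rewrite eq_sym.
rewrite card_in_imset; last first.
  move=> A B; rewrite !inE => /andP[sA _] /andP[sB _] eAB.
  have vA : v \notin A by apply/negP => /(subsetP sA); rewrite !inE eqxx.
  have vB : v \notin B by apply/negP => /(subsetP sB); rewrite !inE eqxx.
  by rewrite -(setU1K vA) eAB setU1K.
rewrite cards_draws; congr 'C(_, _).
by rewrite cardsCs setCK cards2 nvw.
Qed.

Lemma dc (R : nmodType) (V : finType) (v : V) (k : nat) (g : {set V} -> R) :
  \sum_(T : {set V} | (#|T| == k) && (v \in T)) \sum_(u | u \notin T) g (u |: (T :\ v))
  = \sum_(T : {set V} | (#|T| == k) && (v \notin T)) g T *+ k.
Proof.
rewrite pair_big_dep.
transitivity (\sum_(T : {set V} | (#|T| == k) && (v \notin T)) \sum_(u | u \in T) g T).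
  rewrite pair_big_dep.
  apply: (@sum_bij _ _ _ _ ( fun x => (x.2 |: (x.1 :\ v), x.2))
                  (fun x => (v |: (x.1 :\ x.2), x.2))).
  - move=> [T u] /= /andP[/andP[/eqP cT vT] uT].
    have uv : u != v by apply/eqP => e; rewrite e vT in uT.
    rewrite setU11 andbT cardsU1 !inE negb_and negb_or uT orbT eqxx /=.
    rewrite (eq_sym v u) uv andbT -cT (cardsD1 v T) vT. by rewrite andbT.
  - move=> [T u] /= /andP[/andP[/eqP cT vT] uT].
    have uv : u != v by apply/eqP => e; rewrite -e uT in vT.
    rewrite setU11 /= cardsU1 !inE (negbTE vT) andbF (negbTE uv) eqxx /= andbT add1n.
    by move: (cardsD1 u T); rewrite uT cT add1n => ->; rewrite eqxx.
  - move=> [T u] /= /andP[/andP[_ vT] uT].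
    have uv : u != v by apply/eqP => e; rewrite e vT in uT.
    have uTv : u \notin T :\ v by rewrite !inE negb_and uT orbT.
    by rewrite setU1K // setD1K.
  - move=> [T u] /= /andP[/andP[_ vT] uT].
    have uv : u != v by apply/eqP => e; rewrite -e uT in vT.
    have vTu : v \notin T :\ u by rewrite !inE negb_and vT orbT.
    by rewrite setU1K // setD1K.
  - by [].
apply: eq_bigr => T /andP[/eqP cT _].
by rewrite sumr_const cT.
Qed.

Lemma symdiff_le (V : finType) (N T : {set V}) (u v : V) :
  u \notin T -> v \notin N ->
  (#|((T :&: N) :\: ((u |: (T :\ v)) :&: N)) :|: (((u |: (T :\ v)) :&: N) :\: (T :&: N))| <= (u \in N))%N.
Proof.
move=> uT vN.
have sub : ((T :&: N) :\: ((u |: (T :\ v)) :&: N)) :|: (((u |: (T :\ v)) :&: N) :\: (T :&: N))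
   \subset [set x | (x == u) && (u \in N)].
  apply/subsetP => x; rewrite !inE.
  have [->|xu] := eqVneq x u; first by rewrite (negbTE uT) /=; case: (u \in N); rewrite ?andbF ?andbT.
  have [->|xv] := eqVneq x v; first by rewrite (negbTE vN) !andbF.
  by case: (x \in T); case: (x \in N).
apply: (leq_trans (subset_leq_card sub)).
case uN: (u \in N).
  by rewrite /= -(cards1 u) subset_leq_card //; apply/subsetP => x; rewrite !inE andbT.
by rewrite leqn0 cards_eq0; apply/eqP/setP => x; rewrite !inE andbF.
Qed.

Lemma count_pairs (V : finType) (N : {set V}) (v : V) (k : nat) :
  v \notin N ->
  (\sum_(T : {set V} | (#|T| == k.+1) && (v \in T)) \sum_(u | u \notin T) ((u \in N) : nat)
   = #|N| * 'C(#|V| - 2, k))%N.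
Proof.
move=> vN.
transitivity (\sum_(T : {set V} | (#|T| == k.+1) && (v \in T)) \sum_(u in N) ((u \notin T) : nat))%N.
  apply: eq_bigr => T _; rewrite big_mkcond [RHS]big_mkcond; apply: eq_bigr => u _.
  by case: (u \in T); case: (u \in N).
rewrite exchange_big /= -sum_nat_const; apply: eq_bigr => u uN.
rewrite -(@count_c V v u k); last by apply/eqP => e; rewrite e uN in vN.
rewrite -sum1dep_card big_mkcondr /= [LHS]big_mkcond [RHS]big_mkcond /=; apply: eq_bigr => T _.
by case: (#|T| == _); case: (v \in T); case: (u \in T).
Qed.

Lemma vertex_bound (R : realFieldType) (V : finType) (e : rel V)
  (n p q : nat) (f : V -> {set V} -> R) (K : V -> R) (v : V) :
  (0 < n)%N -> (0 < p)%N -> irreflexive e ->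
  #|V| = ((p + q) * n)%N -> (0 < deg V e v)%N -> lipschitz_at R V e f K v ->
  n%:R * `|\sum_(T : {set V} | #|T| == (p * n)%N) sigma R V p q T v * f v (T :&: nbhd V e v)|
   <= K v * ('C(#|V| - 2, (p * n).-1))%:R.
Proof.
move=> n0 p0 irr cV dv [K0 lip].
set N := nbhd V e v.
pose g := fun T : {set V} => f v (T :&: N).
have vN : v \notin N by rewrite /N /nbhd inE irr.
have kpos : (0 < p * n)%N by rewrite muln_gt0 p0 n0.
set k := (p * n)%N.
have E1 : \sum_(T : {set V} | #|T| == k) sigma R V p q T v * f v (T :&: N) =
   q%:R * \sum_(T : {set V} | (#|T| == k) && (v \in T)) g T
   - p%:R * \sum_(T : {set V} | (#|T| == k) && (v \notin T)) g T.
  rewrite (bigID (fun T : {set V} => v \in T)) /= !mulr_sumr -sumrN; congr (_ + _).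
    by apply: eq_bigr => T /andP[_ vT]; rewrite /sigma vT.
  by apply: eq_bigr => T /andP[_ vT]; rewrite /sigma (negbTE vT) mulNr.
have E2 : \sum_(T : {set V} | (#|T| == k) && (v \in T)) \sum_(u | u \notin T) (g T - g (u |: (T :\ v)))
   = (\sum_(T : {set V} | (#|T| == k) && (v \in T)) g T) *+ (q * n)
   - (\sum_(T : {set V} | (#|T| == k) && (v \notin T)) g T) *+ k.
  rewrite -!sumrMnl -(dc _ _ v k g) -sumrB; apply: eq_bigr => T /andP[/eqP cT _].
  rewrite sumrB; congr (_ - _).
  rewrite (eq_bigl (fun u => u \in ~: T)); last by move=> u; rewrite inE.
  rewrite sumr_const; congr (_ *+ _).
  by rewrite cardsCs setCK cT cV /k mulnDl addKn.
have E3 : n%:R * (\sum_(T : {set V} | #|T| == k) sigma R V p q T v * f v (T :&: N)) =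
   \sum_(T : {set V} | (#|T| == k) && (v \in T)) \sum_(u | u \notin T) (g T - g (u |: (T :\ v))).
  rewrite E1 E2 mulrBr !mulrA -!natrM !mulr_natl /k; congr (_ *+ _ - _ *+ _); lia.
rewrite -[n%:R]ger0_norm ?ler0n // -normrM E3.
apply: (le_trans (ler_norm_sum _ _ _)).
apply: (@le_trans _ _ (\sum_(T : {set V} | (#|T| == k) && (v \in T)) \sum_(u | u \notin T) K v * ((u \in N) : nat)%:R / (deg V e v)%:R)).
  apply: ler_sum => T /andP[_ vT]; apply: (le_trans (ler_norm_sum _ _ _)).
  apply: ler_sum => u uT.
  apply: (le_trans (lip _ _ (subsetIr _ _) (subsetIr _ _))).
  apply: ler_wpM2r; first by rewrite invr_ge0 ler0n.
  apply: ler_wpM2l; first exact: ltW.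
  by rewrite ler_nat symdiff_le.
have -> : \sum_(T : {set V} | (#|T| == k) && (v \in T)) \sum_(u | u \notin T) K v * ((u \in N) : nat)%:R / (deg V e v)%:R
   = K v / (deg V e v)%:R * (\sum_(T : {set V} | (#|T| == k) && (v \in T)) \sum_(u | u \notin T) ((u \in N) : nat))%:R.
  rewrite natr_sum mulr_sumr; apply: eq_bigr => T _.
  rewrite natr_sum mulr_sumr; apply: eq_bigr => u _; by rewrite mulrAC.
have := @count_pairs V N v k.-1 vN; rewrite prednK // => ->.
rewrite natrM mulrA divfK //; by rewrite pnatr_eq0 -lt0n.
Qed.

Theorem mainTheorem13 (R : realFieldType) (V : finType) (e : rel V)
  (n p q : nat) (f : V -> {set V} -> R) (K : V -> R) :
  (0 < n)%N -> (0 < p)%N -> (0 < q)%N ->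
  simple_graph V e ->
  #|V| = ((p + q) * n)%N ->
  (forall v : V, (0 < deg V e v)%N) ->
  (forall v : V, f v set0 = 0) ->
  (forall v : V, lipschitz_at R V e f K v) ->
  let Kbar := (((p + q) * n)%:R)^-1 * \sum_(v : V) K v in
  `|expect_size R V (p * n) (xi R V e n p q f)| <= Kbar / (((p + q) * n)%:R - 1).
Proof.
intros n0 p0 q0 sg cV dpos f0 lip; cbv zeta; have [_ irr] : symmetric e /\ irreflexive e := sg.
set C := 'C(#|V| - 2, (p * n).-1).
have Sv : forall v, `|\sum_(T : {set V} | #|T| == (p * n)%N) sigma R V p q T v * f v (T :&: nbhd V e v)|
   <= K v * C%:R / n%:R.
  move=> v; rewrite ler_pdivlMr ?ltr0n // mulrC.
  apply: vertex_bound => //.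
set N := ((p + q) * n)%N.
have kpos : (0 < p * n)%N by rewrite muln_gt0 p0 n0.
have NC : ((p * n) * (q * n) * 'C(N, p * n) = N * (N - 1) * C)%N.
  have h1 := mul_bin_diag N (p * n).-1.
  have h2 := mul_bin_down N.-1 (p * n).-1.
  rewrite prednK // in h1.
  have e1 : (N.-1 - (p * n).-1 = q * n)%N by rewrite /N; nia.
  rewrite e1 in h2.
  have e2 : (#|V| - 2 = N.-1.-1)%N by rewrite cV subn2.
  rewrite /C e2 mulnAC -h1 -mulnA subn1 -mulnA h2.
  by rewrite [(_ * (q * n))%N]mulnC.
rewrite /expect_size card_draws cV -/N.
set m := 'C(N, p * n).
have kN : (p * n < N)%N by rewrite /N mulnDl -[X in (X < _)%N]addn0 ltn_add2l muln_gt0 q0 n0.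
have m0 : (0 < m)%N by rewrite bin_gt0 ltnW.
have N1 : (1 < N)%N by apply: leq_ltn_trans kN.
have -> : \sum_(T : {set V} | #|T| == (p * n)%N) xi R V e n p q f T =
    ((p * q * n)%:R)^-1 * \sum_(v : V) \sum_(T : {set V} | #|T| == (p * n)%N) sigma R V p q T v * f v (T :&: nbhd V e v).
  by rewrite /xi -mulr_sumr exchange_big.
set X := \sum_(v : V) \sum_(T : {set V} | #|T| == (p * n)%N) sigma R V p q T v * f v (T :&: nbhd V e v).
have key : `|((p * q * n)%:R)^-1 * X / m%:R| <= N%:R^-1 * (\sum_v K v) / (N%:R - 1) :> R.
  rewrite -mulrA normrM ger0_norm ?invr_ge0 ?ler0n // normrM [`|m%:R^-1|]ger0_norm ?invr_ge0 ?ler0n //.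
  apply: (@le_trans _ _ (((p * q * n)%:R)^-1 * ((\sum_(v : V) K v * C%:R / n%:R) * m%:R^-1))).
    apply: ler_wpM2l; first by rewrite invr_ge0 ler0n.
    apply: ler_wpM2r; first by rewrite invr_ge0 ler0n.
    apply: (le_trans (ler_norm_sum _ _ _)); apply: ler_sum => v _; exact: Sv.
  have Ceq : C%:R = (p * n * (q * n) * m)%:R / (N * (N - 1))%:R :> R.
    rewrite NC natrM [X in X / _]mulrC mulfK // pnatr_eq0 muln_eq0 negb_or -!lt0n subn_gt0 N1 andbT.
    exact: ltnW.
  rewrite -(natrB _ (ltnW N1)) Ceq -!mulr_suml.
  rewrite le_eqVlt; apply/orP; left; apply/eqP.
  rewrite !natrM.
  have hN : (N - 1)%:R != 0 :> R by rewrite pnatr_eq0 subn_eq0 -ltnNge.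
  have hN' : N%:R != 0 :> R by rewrite pnatr_eq0 -lt0n (ltnW N1).
  have hm : m%:R != 0 :> R by rewrite pnatr_eq0 -lt0n.
  have hn : n%:R != 0 :> R by rewrite pnatr_eq0 -lt0n.
  have hp : p%:R != 0 :> R by rewrite pnatr_eq0 -lt0n.
  have hq : q%:R != 0 :> R by rewrite pnatr_eq0 -lt0n.
  field.
  have hpq : p%:R + q%:R != 0 :> R by rewrite -natrD pnatr_eq0 -lt0n addn_gt0 p0.
  by rewrite hN hn hpq hm hq hp.
exact: key.
Qed.
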